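(* Let $A \in \mathbb{R}^{n\times n}$ be symmetric positive definite with smallest eigenvalue $\alpha>0$ and largest eigenvalue $\beta$. Let $\xi \ge 0$, $\eta = \frac{1}{1+\xi}$, and $\zeta = \frac{2\eta}{\alpha+\beta}$. Let $f(t) = 2t - t^2$ and $P_1 = 2\zeta I - \zeta^2 A$. Set $\hat\alpha_\eta = \frac{2\eta\alpha}{\alpha+\beta}$ and $\hat\beta_\eta = \frac{2\eta\beta}{\alpha+\beta}$, and assume $\hat \alpha_\eta + 2(1 - \eta) < 1$. Denote by $$\hat \alpha_\eta = \lambda_1^{(0)} \le \lambda_2^{(0)} \le \ldots \le \lambda_n^{(0)} = \hat \beta_\eta$$ the eigenvalues of the scaled matrix $\zeta A$, and by $$\lambda_1^{(1)} \le \lambda_2^{(1)} \le \ldots \le \lambda_n^{(1)}$$ the eigenvalues of $P_1 A$ (counted with multiplicity). Let $k$ be the integer satisfying $\lambda_k^{(0)} \le \hat \alpha_\eta + 2(1 - \eta) \le \lambda_{k+1}^{(0)}$. Then $$\lambda_j^{(1)} = f(\lambda_j^{(0)}), \qquad j = 1, \ldots, k.$$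
   Context: Note that $P_1 A = 2\zeta A - \zeta^2 A^2 = f(\zeta A)$, i.e. $P_1$ is the first step of the scaled Newton (Hotelling) iteration for $A^{-1}$ started from $P_0 = I$, with the scaling $\zeta = 2/((\alpha+\beta)(1+\xi))$ obtained by enlarging the usual parameter $\theta = (\alpha+\beta)/2$ to $\bar\theta = \theta(1+\xi)$. *)

(* Defs.v *)
From HB Require Import structures.
From mathcomp Require Import all_boot all_order all_algebra.
Set Implicit Arguments. Unset Strict Implicit. Unset Printing Implicit Defensive.
Import Order.TTheory GRing.Theory Num.Theory.
Local Open Scope ring_scope.

Definition fN (R : ringType) (t : R) : R := 2 * t - t ^+ 2.

Definition P1 (R : comRingType) (n : nat) (zeta : R) (A : 'M[R]_n) : 'M[R]_n :=
  (2 * zeta)%:M - zeta ^+ 2 *: A.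

Definition sorted_eigenvalues (R : numDomainType) (n : nat) (M : 'M[R]_n)
    (lam : 'I_n -> R) : Prop :=
  char_poly M = \prod_(i < n) ('X - (lam i)%:P) /\
  (forall i j : 'I_n, (i <= j)%N -> lam i <= lam j).

(* Main.v *)
Require Import Defs.
From HB Require Import structures.
From mathcomp Require Import all_boot all_order all_algebra.
From mathcomp Require Import reals.
From mathcomp Require Import ring lra.
Set Implicit Arguments. Unset Strict Implicit.
Import Order.TTheory GRing.Theory Num.Theory.
Local Open Scope ring_scope.

Lemma char_eval (R : comNzRingType) n (M : 'M[R]_n) y :
  (char_poly M).[y] = \det (y%:M - M).
Proof.
rewrite /char_poly -horner_evalE -det_map_mx; congr (\det _).
apply/matrixP => i j; rewrite !mxE /=.
by case: (i == j); rewrite /horner_eval /= ?mulr1n ?mulr0n !hornerE.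
Qed.

Lemma poly_eq_pts (R : idomainType) (g : nat -> R) (p q : {poly R}) :
  injective g -> (forall i, p.[g i] = q.[g i]) -> p = q.
Proof.
move=> ig h; apply/eqP; rewrite -subr_eq0; apply/eqP.
apply: (@roots_geq_poly_eq0 _ _ (map g (iota 0 (size (p - q))))).
- by apply/allP => x /mapP [i _ ->]; rewrite /root hornerD hornerN h subrr.
- by rewrite map_inj_uniq ?iota_uniq.
- by rewrite size_map size_iota.
Qed.

Lemma char_scale (R : numFieldType) n (M : 'M[R]_n) (mu : 'I_n -> R) c :
  c != 0 -> char_poly M = \prod_(i < n) ('X - (mu i)%:P) ->
  char_poly (c *: M) = \prod_(i < n) ('X - (c * mu i)%:P).
Proof.
move=> c0 hM; apply: (@poly_eq_pts _ (fun i => i%:R)).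
  by move=> i j /eqP; rewrite eqr_nat => /eqP.
move=> i; set y : R := i%:R; rewrite char_eval.
have -> : y%:M - c *: M = c *: ((y / c)%:M - M).
  by rewrite scalerBr scale_scalar_mx mulrCA mulfV // mulr1.
rewrite detZ -char_eval hM !horner_prod.
have -> : c ^+ n = \prod_(i < n) c by rewrite prodr_const card_ord.
rewrite -big_split /=.
by apply: eq_bigr => j _; rewrite !hornerE mulrBr mulrC divfK.
Qed.

Lemma mx_quad (R : comNzRingType) n (B : 'M[R]_n) a b :
  (a%:M - B) *m (b%:M - B) = (a * b)%:M - (a + b) *: B + B *m B.
Proof.
rewrite mulmxBl !mulmxBr -scalar_mxM mul_scalar_mx mul_mx_scalar scalerDl.
by rewrite opprB opprD !addrA [_ + B *m B]addrAC.
Qed.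

Lemma char_f (R : numFieldType) n (B : 'M[R]_n) (l : 'I_n -> R) :
  char_poly B = \prod_(i < n) ('X - (l i)%:P) ->
  char_poly (2 *: B - B *m B) = \prod_(i < n) ('X - (fN (l i))%:P).
Proof.
move=> hB; apply: (@poly_eq_pts _ (fun i => 1 - (i%:R) ^+ 2)).
  move=> i j /eqP; rewrite -subr_eq0 opprB addrC subrKA subr_eq0 -!natrX eqr_nat.
  by rewrite eqn_exp2r // => /eqP.
move=> i; set s : R := i%:R; rewrite char_eval.
have -> : (1 - s ^+ 2)%:M - (2 *: B - B *m B) = ((1 + s)%:M - B) *m ((1 - s)%:M - B).
  have e1 : (1 + s) * (1 - s) = 1 - s ^+ 2 by ring.
  have e2 : (1 + s) + (1 - s) = 2 by ring.
  by rewrite mx_quad e1 e2 opprB addrA addrAC.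
rewrite det_mulmx -!char_eval hB !horner_prod -big_split /=.
by apply: eq_bigr => j _; rewrite !hornerE /fN; ring.
Qed.

Lemma fN_mono (R : realDomainType) (t u : R) : t <= u -> u <= 1 -> fN t <= fN u.
Proof.
move=> tu u1; rewrite /fN -subr_ge0.
have -> : 2 * u - u ^+ 2 - (2 * t - t ^+ 2) = (u - t) * (2 - u - t) by ring.
by apply: mulr_ge0; lra.
Qed.

Lemma fN_low (R : realDomainType) (t c : R) : c <= t -> t <= 2 - c -> fN c <= fN t.
Proof.
move=> ct tc; rewrite /fN -subr_ge0.
have -> : 2 * t - t ^+ 2 - (2 * c - c ^+ 2) = (t - c) * (2 - t - c) by ring.
by apply: mulr_ge0; lra.
Qed.

Definition sq {R : Type} {N} (l : 'I_N.+1 -> R) := mkseq (fun i => l (inord i)) N.+1.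

Lemma prod_sq (R : numDomainType) N (l : 'I_N.+1 -> R) :
  \prod_(i < N.+1) ('X - (l i)%:P) = \prod_(x <- sq l) ('X - x%:P).
Proof.
rewrite /sq /mkseq big_map; change (iota 0 N.+1) with (index_iota 0 N.+1).
by rewrite big_mkord; apply: eq_bigr => i _; rewrite inord_val.
Qed.

Lemma sorted_sq (R : realDomainType) N (l : 'I_N.+1 -> R) :
  (forall i j : 'I_N.+1, (i <= j)%N -> l i <= l j) -> sorted <=%R (sq l).
Proof.
move=> m; apply/(sortedP 0) => i; rewrite size_mkseq => hi.
rewrite !nth_mkseq // 1?ltnW //; apply: m; rewrite !inordK // ltnW //.
Qed.

Lemma eig_unique (R : realFieldType) N (l1 l2 : 'I_N.+1 -> R) :
  (forall i j : 'I_N.+1, (i <= j)%N -> l1 i <= l1 j) ->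
  (forall i j : 'I_N.+1, (i <= j)%N -> l2 i <= l2 j) ->
  \prod_(i < N.+1) ('X - (l1 i)%:P) = \prod_(i < N.+1) ('X - (l2 i)%:P) ->
  l1 =1 l2.
Proof.
move=> m1 m2; rewrite !prod_sq => /prod_XsubC_eq hp.
have E := @sorted_eq _ <=%R le_trans le_anti _ _ (sorted_sq m1) (sorted_sq m2) hp.
move=> i; have := congr1 (fun s => nth 0 s i) E.
by rewrite /= /sq !nth_mkseq // inord_val.
Qed.

Theorem theorem2p3 (R : realType) (n : nat) (A : 'M[R]_n.+1)
  (mu lam0 lam1 : 'I_n.+1 -> R) (xi : R) (k : nat) :
  A^T = A ->
  (forall v : 'cV[R]_n.+1, v != 0 -> 0 < (v^T *m A *m v) ord0 ord0) ->
  sorted_eigenvalues A mu ->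
  let alpha := mu ord0 in
  let beta := mu ord_max in
  0 < alpha ->
  0 <= xi ->
  let eta := 1 / (1 + xi) in
  let zeta := 2 * eta / (alpha + beta) in
  let alpha_hat := 2 * eta * alpha / (alpha + beta) in
  alpha_hat + 2 * (1 - eta) < 1 ->
  sorted_eigenvalues (zeta *: A) lam0 ->
  sorted_eigenvalues (P1 zeta A *m A) lam1 ->
  (1 <= k <= n.+1)%N ->
  lam0 (inord k.-1) <= alpha_hat + 2 * (1 - eta) ->
  ((k < n.+1)%N -> alpha_hat + 2 * (1 - eta) <= lam0 (inord k)) ->
  forall j : 'I_n.+1, (j < k)%N -> lam1 j = fN (lam0 j).
Proof.
move=> _ _ [hmu mmu] alpha beta a0 xi0 eta zeta ah hc [h0 m0] [h1 m1] /andP[k1 kn] hk hk1 j jk.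
set c := ah + 2 * (1 - eta) in hc hk hk1.
have ab : alpha <= beta by apply: mmu; rewrite leq0n.
have eta0 : 0 < eta by rewrite /eta divr_gt0 //; lra.
have ab0 : 0 < alpha + beta by lra.
have z0 : 0 < zeta by rewrite /zeta divr_gt0 // mulr_gt0.
have hl0 : forall i, lam0 i = zeta * mu i.
  apply: eig_unique => //.
    by move=> i i' ii; rewrite ler_pM2l // mmu.
  by rewrite -h0 (char_scale _ hmu) // gt_eqF.
have hP : P1 zeta A *m A = 2 *: (zeta *: A) - (zeta *: A) *m (zeta *: A).
  rewrite /P1 mulmxBl mul_scalar_mx -scalemxAl -scalemxAr -scalemxAl !scalerA.
  by rewrite mulrC expr2.
have h1' := char_f h0; rewrite -hP in h1'.
have hperm : perm_eq (sq lam1) (sq (fun i => fN (lam0 i))).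
  by apply: prod_XsubC_eq; rewrite -!prod_sq -h1 h1'.
have hzb : lam0 ord_max = 2 - c.
  have ab0' : alpha + beta != 0 by rewrite gt_eqF.
  by rewrite hl0 /c /ah /zeta -/beta; field.
have hlow : forall i : 'I_n.+1, (i < k)%N -> lam0 i <= c.
  move=> i ik; apply: le_trans hk; apply: m0; rewrite inordK; first by rewrite -ltnS prednK.
  by rewrite prednK.
have hhigh : forall i : 'I_n.+1, (k <= i)%N -> c <= lam0 i.
  move=> i ki; have kn1 : (k < n.+1)%N by apply: leq_ltn_trans ki (ltn_ord i).
  by apply: le_trans (hk1 kn1) _; apply: m0; rewrite inordK.
have hup : forall i, lam0 i <= 2 - c by move=> i; rewrite -hzb; apply: m0; rewrite -ltnS ltn_ord.
pose h := fun i : nat => fN (lam0 (inord i)).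
pose a := map h (iota 0 k); pose b := map h (iota k (n.+1 - k)).
have eab : sq (fun i => fN (lam0 i)) = a ++ b by rewrite /sq /mkseq -map_cat -iotaD subnKC.
have E : sq lam1 = a ++ sort <=%R b.
  apply: (@sorted_eq _ <=%R le_trans le_anti); first exact: sorted_sq.
    rewrite sorted_pairwise; last exact: le_trans.
    rewrite pairwise_cat; apply/and3P; split.
    - apply/allrelP => x y /mapP[i]; rewrite mem_iota => /andP[_ hi] ->.
      rewrite mem_sort => /mapP[i']; rewrite mem_iota => /andP[hi' hi'n] ->.
      rewrite subnKC // in hi'n.
      apply: (@le_trans _ _ (fN c)).
        apply: fN_mono; last lra.
        apply: hlow; rewrite inordK //; apply: leq_trans hi kn.
      apply: fN_low; first by apply: hhigh; rewrite inordK.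
      exact: hup.
    - rewrite -sorted_pairwise; last exact: le_trans.
      apply/(sortedP 0) => i; rewrite size_map size_iota => hi.
      have hi0 := ltnW hi.
      rewrite !(nth_map 0%N) ?size_iota // !nth_iota // !add0n /h.
      apply: fN_mono.
        by apply: m0; rewrite !inordK // (leq_trans _ kn) // ltnW.
      have := hlow (inord i.+1); rewrite inordK ?(leq_trans hi kn) //; move=> /(_ hi); lra.
    - rewrite -sorted_pairwise; last exact: le_trans.
      by apply: sort_sorted => x y; apply: le_total.
  by apply: (perm_trans hperm); rewrite eab perm_cat2l perm_sym perm_sort.
have := congr1 (fun s => nth 0 s j) E.
rewrite /= nth_cat size_map size_iota jk (nth_map 0%N) ?size_iota // nth_iota //.
by rewrite /sq nth_mkseq // /h !inord_val.
Qed.
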